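(* Let $s\ge2$ and constants $0<a<b$. Let $r(t)$, $t\ge0$, be a differentiable function with $$\dot r\ge a r^{s-1}-br^{2s-1},$$ with $r_0>0$ and $r_t\le1$ for all $t$. Let $k=a/b$ and $T=\inf\{t\ge0:r_t\ge k^2\}$. Then $$T\le\frac1{bk^2}\Big(\frac{2k}{r_0^{s-1}}+\log\frac1{1-k}\Big).$$ *)

(* Defs.v *)
From HB Require Import structures.
From mathcomp Require Import all_boot all_order all_algebra.
From mathcomp Require Import all_classical all_reals all_analysis.
Set Implicit Arguments. Unset Strict Implicit. Unset Printing Implicit Defensive.

(* Main.v *)
Require Import Defs.
From HB Require Import structures.
From mathcomp Require Import all_boot all_order all_algebra.
From mathcomp Require Import all_classical all_reals all_analysis.
From mathcomp Require Import ring lra.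
Import Order.TTheory GRing.Theory Num.Theory.
Import numFieldNormedType.Exports.
Local Open Scope classical_set_scope.
Local Open Scope ring_scope.

Section H.
Context {R : realType}.

Lemma is_derive_comp1 (f g : R -> R) (x df dg : R) :
  is_derive x 1 f df -> is_derive (f x) 1 g dg ->
  is_derive x 1 (fun t => g (f t)) (dg * df).
Proof.
move=> hf hg.
have d1 : derivable f x 1 by apply: ex_derive.
have d2 : derivable g (f x) 1 by apply: ex_derive.
apply: DeriveDef.
  apply/derivable1_diffP.
  exact: (@differentiable_comp _ _ _ _ f g x (proj1 (derivable1_diffP _ _) d1) (proj1 (derivable1_diffP _ _) d2)).
rewrite -derive1E.
have := derive1_comp d1 d2.
rewrite /comp => ->.
by rewrite !derive1E !derive_val.
Qed.

Lemma is_derive_ln_comp (q : R -> R) (x dq : R) :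
  is_derive x 1 q dq -> 0 < q x ->
  is_derive x 1 (fun t => ln (q t)) ((q x)^-1 * dq).
Proof.
move=> hq qx; apply: is_derive_comp1 => //; exact: is_derive1_ln.
Qed.

Lemma is_derive_sq (k x : R) : is_derive x 1 (fun y : R => k - y ^+ 2) (- (2 * x)).
Proof.
have h : is_derive x 1 (cst k - (@id R) ^+ 2) (0 - ((2%:R * x ^+ 1) *: 1)) by apply: is_deriveB.
have -> : (fun y : R => k - y ^+ 2) = (cst k - (@id R) ^+ 2) by apply: funext.
apply: is_derive_eq; rewrite expr1 sub0r scaler1 //.
Qed.


Lemma cont_of_der (f : R -> R) x : derivable f x 1 -> {for x, continuous f}.
Proof. by move=> /derivable1_diffP /differentiable_continuous. Qed.

Lemma within_cont (f : R -> R) c : 0 < c ->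
  (forall t, 0 < t <= c -> derivable f t 1) -> f x @[x --> 0^'+] --> f 0 ->
  {within `[0, c], continuous f}.
Proof.
move=> c0 hd h0; apply/continuous_within_itvP => //; split => //.
- move=> t; rewrite in_itv /= => /andP[t0 tc]; apply: cont_of_der (hd _ _).
  by rewrite t0 ltW.
- apply: cvg_at_left_filter; apply: cont_of_der (hd _ _); by rewrite c0 lexx.
Qed.

Lemma right_cont (f : R -> R) d : 0 <= d ->
  (forall t, 0 < t -> derivable f t 1) -> f x @[x --> 0^'+] --> f 0 ->
  f x @[x --> d^'+] --> f d.
Proof.
move=> d0 hd h0; have [->//|dp] := eqVneq d 0.
have dpos : 0 < d by rewrite lt_def dp d0.
apply: cvg_at_right_filter; exact: cont_of_der (hd _ dpos).
Qed.

Lemma right_delta (f : R -> R) d l : f x @[x --> d^'+] --> f d -> l < f d ->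
  exists2 e, 0 < e & forall t, d < t < d + e -> l < f t.
Proof.
move=> /cvgrPdist_lt /(_ (f d - l)); rewrite subr_gt0 => H /H {H}.
rewrite near_withinE => /nbhs_ballP [e /= e0 he]; exists e => // t /andP[dt tde].
have := he t; rewrite ball_itv /= in_itv /= tde andbT.
have -> : d - e < t by rewrite (lt_trans _ dt)// ltrBlDr ltrDl.
move=> /(_ isT dt) h; have := le_lt_trans (ler_norm _) h; lra.
Qed.

Lemma stay_above (f : R -> R) (T : R) :
  (forall t, 0 < t -> derivable f t 1) -> f x @[x --> 0^'+] --> f 0 -> 0 < f 0 ->
  (forall t, 0 < t < T -> 0 < f t -> 0 < derive1 f t) ->
  forall t, 0 <= t <= T -> f 0 <= f t.
Proof.
move=> hd h0 f0 hpos t1 /andP[t10 t1T].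
rewrite leNgt; apply/negP => ft1.
set m := Num.max (f t1) 0.
have m1 : f t1 <= m by rewrite le_max lexx.
have m2 : 0 <= m by rewrite le_max lexx orbT.
have m3 : m < f 0 by rewrite gt_max ft1 f0.
set l := (m + f 0) / 2.
have l0 : 0 < l by rewrite /l; lra.
have lf0 : l < f 0 by rewrite /l; lra.
have ft1l : f t1 < l by rewrite /l; lra.
set B := [set t | 0 <= t <= t1 /\ f t <= l].
have hB : B t1 by split; [rewrite t10 lexx | exact: ltW].
have lbB : lbound B 0 by move=> x [/andP[]].
have hlB : has_lbound B by exists 0.
set d := inf B.
have dle : d <= t1 by exact: ge_inf.
have d0 : 0 <= d by apply: lb_le_inf => //; exists t1.
have fd : f d <= l.
  rewrite leNgt; apply/negP => fdl.
  have [e e0 he] := @right_delta f d l (@right_cont f d d0 hd h0) fdl.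
  have [x Bx xd] := inf_adherent e0 (conj (ex_intro _ t1 hB) hlB).
  have dx : d <= x by exact: ge_inf.
  case: Bx => _ fx.
  move: dx; rewrite le_eqVlt => /orP[/eqP dx|dx].
    by move: fdl; rewrite dx ltNge fx.
  by have := he x; rewrite dx xd => /(_ isT); rewrite ltNge fx.
have dpos : 0 < d.
  rewrite lt_def d0 andbT; apply/negP => /eqP d0'.
  by move: fd; rewrite d0' leNgt lf0.
have above : forall t, 0 <= t < d -> l < f t.
  move=> t /andP[t0 td]; rewrite ltNge; apply/negP => ftl.
  have : d <= t by apply: ge_inf => //; split => //; rewrite t0 (ltW (lt_le_trans td dle)).
  by rewrite leNgt td.
have cont : {within `[0, d], continuous f}.
  by apply: within_cont => // t /andP[t0 _]; exact: hd.
have hder : forall x, x \in `]0, d[ -> is_derive x 1 f (derive1 f x).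
  by move=> x; rewrite in_itv /= => /andP[x0 _]; rewrite derive1E; exact: derivableP (hd _ x0).
have [c cin hc] := MVT dpos hder cont.
move: cin; rewrite in_itv /= => /andP[c0 cd].
have fc : l < f c by apply: above; rewrite (ltW c0) cd.
have := hpos c; rewrite c0 (lt_le_trans cd (le_trans dle t1T)) (lt_trans l0 fc) => /(_ isT isT) dpc.
have : f d - f 0 < 0 by lra.
rewrite hc subr0 pmulr_llt0 // ltNge (ltW dpc) //.
Qed.

Lemma core_ineq (b k P u w r rp : R) : 0 < b -> 0 < P -> P <= u -> w = r * u ->
  w <= r ^+ 2 -> 0 < r -> r ^+ 2 < k -> b * k * u - b * (u * w) <= rp ->
  b * k <= rp * (P^-1 + r / (k - r ^+ 2)).
Proof.
move=> b0 P0 Pu wE wr r0 rk hrp.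
set q := k - r ^+ 2.
have q0 : 0 < q by rewrite /q subr_gt0.
set z := r / q.
have z0 : 0 <= z by rewrite /z divr_ge0 // ltW.
have zq : z * q = r by rewrite /z divfK // gt_eqF.
have u0 : 0 < u by exact: lt_le_trans Pu.
have i1 : 1 <= P^-1 * u by rewrite mulrC -(@divff _ P) ?gt_eqF // ler_pM2r ?invr_gt0.
have kw : q <= k - w by rewrite /q; lra.
have p1 : 0 <= (P^-1 * u - 1) * (k - w) by apply: mulr_ge0; lra.
have p2 : 0 <= (u * z) * ((k - w) - q) by apply: mulr_ge0; [apply: mulr_ge0; lra | lra].
have X0 : 0 <= P^-1 + z by apply: addr_ge0 => //; rewrite invr_ge0 ltW.
have p3 : 0 <= (rp - b * u * (k - w)) * (P^-1 + z) by apply: mulr_ge0 => //; lra.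
have e1 : u * z * q = w by rewrite -mulrA zq wE mulrC.
nra.
Qed.

Lemma aux1 (b k : R) : 0 < b -> 0 < k -> k < 1 -> b * k ^+ 2 <= 2 * b * k.
Proof. move=> b0 k0 k1; have h : 0 < 2 - k by lra. have := mulr_gt0 (mulr_gt0 b0 k0) h; rewrite expr2 => h2; nra. Qed.

Lemma aux2 (k : R) : 0 < k -> k < 1 -> k ^+ 2 <= 2.
Proof. move=> k0 k1; rewrite expr2; nra. Qed.

Lemma is_derive_g (c1 c2 k y : R) : 0 < k - y ^+ 2 ->
  is_derive y 1 (fun y => c1 * y - c2 * ln (k - y ^+ 2))
    (c1 - c2 * ((k - y ^+ 2)^-1 * (- (2 * y)))).
Proof.
move=> hy.
have H1 := @is_derive_ln_comp _ _ _ (is_derive_sq k y) hy.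
have H2 : is_derive y 1 (c1 *: (@id R) - c2 *: (fun y => ln (k - y ^+ 2)))
   (c1 *: 1 - c2 *: ((k - y ^+ 2)^-1 * (- (2 * y)))).
  by apply: is_deriveB; apply: is_deriveZ.
have -> : (fun y => c1 * y - c2 * ln (k - y ^+ 2)) =
   (c1 *: (@id R) - c2 *: (fun y => ln (k - y ^+ 2))) by apply: funext.
by apply: is_derive_eq; rewrite /GRing.scale /= mulr1.
Qed.
End H.

Theorem lemmaH2 (R : realType) (s a b : R) (r : R -> R)
  (hs : 2 <= s) (ha : 0 < a) (hab : a < b)
  (hder : forall t, 0 < t -> derivable r t 1)
  (hcont0 : r x @[x --> 0^'+] --> r 0)
  (hode : forall t, 0 < t ->
     a * r t `^ (s - 1) - b * r t `^ (2 * s - 1) <= derive1 r t)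
  (hr0 : 0 < r 0)
  (hr1 : forall t, 0 <= t -> r t <= 1) :
  let k := a / b in
  let T := ereal_inf [set t%:E | t in [set t : R | 0 <= t /\ k ^+ 2 <= r t]] in
  (T <= ((b * k ^+ 2)^-1 * (2 * k / r 0 `^ (s - 1) + ln (1 / (1 - k))))%:E)%E.
Proof.
rewrite /=.
set k := a / b.
set T := ereal_inf _.
have b0 : 0 < b by exact: lt_trans hab.
have k0 : 0 < k by rewrite /k divr_gt0.
have k1 : k < 1 by rewrite /k ltr_pdivrMr // mul1r.
have hak : a = b * k by rewrite /k mulrC divfK // gt_eqF.
set P := r 0 `^ (s - 1).
have P0 : 0 < P by exact: powR_gt0.
set L := ln (1 / (1 - k)).
have LE : L = - ln (1 - k) by rewrite /L div1r lnV // posrE subr_gt0.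
have L0 : 0 <= L by rewrite /L ln_ge0 // div1r invf_ge1 ?subr_gt0 //; lra.
set T0 := (b * k ^+ 2)^-1 * (2 * k / P + L).
have bk0 : 0 < b * k ^+ 2 by rewrite mulr_gt0 // exprn_gt0.
have T00 : 0 < T0.
  rewrite /T0 mulr_gt0 ?invr_gt0 //; apply: ltr_wpDr => //.
  by rewrite divr_gt0 // mulr_gt0.
case: (pselect (exists t, 0 <= t <= T0 /\ k ^+ 2 <= r t)) => [[t [/andP[t0 tT] kr]]|none].
  apply: (@le_trans _ _ t%:E); last by rewrite lee_fin.
  by apply: ereal_inf_lbound; exists t.
exfalso.
have ltk2 : forall t, 0 <= t <= T0 -> r t < k ^+ 2.
  move=> t ht; rewrite ltNge; apply/negP => kr; apply: none; by exists t.
have kk : k ^+ 2 < k by rewrite expr2 gtr_pMr.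
have hpos : forall t, 0 < t < T0 -> 0 < r t -> 0 < derive1 r t.
  move=> t /andP[t0 tT] rt0.
  have rt1 : r t <= 1 by apply: hr1; exact: ltW.
  have rtk : r t < k by apply: lt_trans kk; apply: ltk2; rewrite (ltW t0) (ltW tT).
  apply: lt_le_trans (hode t t0).
  have e2 : r t `^ (2 * s - 1) = r t `^ (s - 1) * r t `^ s.
    have -> : 2 * s - 1 = (s - 1) + s by lra.
    by rewrite powRD // (lt0r_neq0 rt0) implybT.
  have ws : r t `^ s <= r t by apply: ge1r_powR; [rewrite rt0 rt1 | lra].
  have u0 : 0 < r t `^ (s - 1) by exact: powR_gt0.
  rewrite e2 hak -mulrA -mulrBr mulr_gt0 // mulrC -mulrBr mulr_gt0 // subr_gt0.
  exact: le_lt_trans ws rtk.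
have above : forall t, 0 <= t <= T0 -> r 0 <= r t.
  by apply: stay_above => //.
have qpos : forall t, 0 <= t <= T0 -> 0 < k - r t ^+ 2.
  move=> t ht; have := above t ht; have := ltk2 t ht.
  have := hr1 t (proj1 (andP ht)) => h1 h2 h3.
  rewrite subr_gt0 (le_lt_trans _ (lt_trans h2 kk)) // expr2 ler_piMr //.
  exact: (le_trans (ltW hr0)).
set c1 := (b * k * P)^-1.
set c2 := (2 * b * k)^-1.
set g := fun y => c1 * y - c2 * ln (k - y ^+ 2).
set dg := fun y => c1 - c2 * ((k - y ^+ 2)^-1 * (- (2 * y))).
set G := fun t => g (r t) - t.
have hGd : forall t, 0 < t <= T0 -> is_derive t 1 G (dg (r t) * derive1 r t - 1).
  move=> t /andP[t0 tT].
  have h1 : is_derive t 1 r (derive1 r t) by rewrite derive1E; exact: derivableP (hder _ t0).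
  have h2 := @is_derive_g R c1 c2 k (r t) (qpos t _).
  have h3 := @is_derive_comp1 R _ _ _ _ _ h1 (h2 _).
  have -> : G = (fun t => g (r t)) - @id R by apply: funext.
  apply: is_deriveB; apply: h3; by rewrite (ltW t0) tT.
have G0 : G x @[x --> 0^'+] --> G 0.
  rewrite /G; apply: cvgB.
    apply: (cvg_comp _ _ hcont0).
    apply: cont_of_der; apply: ex_derive.
    by apply: is_derive_g; apply: qpos; rewrite lexx ltW.
  by apply: cvg_at_right_filter; exact: cvg_id.
have Gc : {within `[0, T0], continuous G}.
  apply: within_cont => // t ht; apply: ex_derive; exact: hGd.
have hGd' : forall x, x \in `]0, T0[ -> is_derive x 1 G (dg (r x) * derive1 r x - 1).
  by move=> x; rewrite in_itv /= => /andP[x0 xT]; apply: hGd; rewrite x0 ltW.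
have [c cin hc] := MVT T00 hGd' Gc.
move: cin; rewrite in_itv /= => /andP[c0 cT].
have hc1 : 0 <= c <= T0 by rewrite (ltW c0) (ltW cT).
have dG0 : 0 <= dg (r c) * derive1 r c - 1.
  set y := r c.
  have y0 : 0 < y := lt_le_trans hr0 (above c hc1).
  have y1 : y <= 1 := hr1 c (ltW c0).
  have yk : y < k ^+ 2 := ltk2 c hc1.
  have q0 := qpos c hc1.
  have Pu : P <= y `^ (s - 1).
    by apply: ge0_ler_powR; rewrite ?nnegrE ?(ltW hr0) ?(ltW y0) ?(above c hc1) //; lra.
  have wE : y `^ s = y * y `^ (s - 1) by rewrite mulr_powRB1 //; [exact: ltW | lra].
  have uy : y `^ (s - 1) <= y by apply: ge1r_powR; [rewrite y0 y1 | lra].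
  have wy : y `^ s <= y ^+ 2 by rewrite wE expr2 ler_pM2l.
  have e2 : y `^ (2 * s - 1) = y `^ (s - 1) * y `^ s.
    have -> : 2 * s - 1 = (s - 1) + s by lra.
    by rewrite powRD // (lt0r_neq0 y0) implybT.
  have hode' := hode c c0; rewrite -/y e2 hak in hode'.
  have hyk : y ^+ 2 < k by rewrite -subr_gt0.
  have key := @core_ineq R _ _ _ _ _ _ _ b0 P0 Pu wE wy y0 hyk hode'.
  have -> : dg y = (b * k)^-1 * (P^-1 + y / (k - y ^+ 2)).
    rewrite /dg /c1 /c2; field.
    by apply/and4P; split; apply: lt0r_neq0 => //; rewrite subr_gt0.
  set X := P^-1 + y / (k - y ^+ 2).
  have bk : 0 < b * k by rewrite mulr_gt0.
  rewrite subr_ge0 -mulrA [X * _]mulrC.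
  rewrite -(@ler_pM2l _ (b * k)) //.
  by rewrite mulVKf ?mulr1 // lt0r_neq0.
have GT : G 0 <= G T0.
  by rewrite -subr_ge0 hc subr0 mulr_ge0 // ltW.
move: GT; rewrite /G /g subr0.
have hT := ltk2 T0 (andb_true_intro (conj (ltW T00) (lexx _))).
have hT' := above T0 (andb_true_intro (conj (ltW T00) (lexx _))).
set rT := r T0 in hT hT' *.
have c10 : 0 < c1 by rewrite /c1 invr_gt0; apply: mulr_gt0; [apply: mulr_gt0; [exact: b0|exact: k0]|exact: P0].
have c20 : 0 < c2 by rewrite /c2 invr_gt0; apply: mulr_gt0; [apply: mulr_gt0; [by []|exact: b0]|exact: k0].
have hq0 : 0 < k - r 0 ^+ 2 by apply: qpos; rewrite lexx ltW.
have hqT : 0 < k - r T0 ^+ 2 by apply: qpos; rewrite lexx ltW.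
have lnA : ln (k - r 0 ^+ 2) <= ln k.
  by rewrite ler_ln ?posrE // gerBl sqr_ge0.
have rT0 : 0 < rT by exact: lt_le_trans hT'.
have k1' : 0 < 1 - k by rewrite subr_gt0.
have lnB : ln k + ln (1 - k) <= ln (k - rT ^+ 2).
  rewrite -lnM ?posrE //.
  have kk1 : 0 < k * (1 - k) by apply: mulr_gt0.
  rewrite ler_ln ?posrE //.
  have : rT ^+ 2 <= k ^+ 2 by rewrite ler_pXn2r ?nnegrE ?ltW // (lt_trans hT kk).
  rewrite expr2; lra.
have eT : T0 = 2 * c1 + (b * k ^+ 2)^-1 * L.
  rewrite /T0 /c1 mulrDr; congr (_ + _); field.
  by apply/and3P; split; apply: lt0r_neq0.
have p1 : c1 * rT < c1 * k ^+ 2 by rewrite ltr_pM2l.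
have p2 : 0 < c1 * r 0 by rewrite mulr_gt0.
have p3 : c2 * (ln (k - r 0 ^+ 2) - ln (k - rT ^+ 2)) <= c2 * L.
  by rewrite ler_pM2l // LE; lra.
have c2le : c2 <= (b * k ^+ 2)^-1.
  rewrite /c2 lef_pV2 ?posrE; [|exact: (mulr_gt0 (mulr_gt0 _ b0) k0)|exact: bk0].
  exact: aux1.
have p4 : c2 * L <= (b * k ^+ 2)^-1 * L by rewrite ler_wpM2r.
have p5 : c1 * k ^+ 2 <= c1 * 2.
  by rewrite ler_pM2l // aux2.
move=> GT.
have : T0 < T0.
  rewrite {1}eT.
  lra.
by rewrite ltxx.
Qed.
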